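(* Let $K_{n,m}$ be a nice complete bipartite graph with $K_{n,m}\ne K_{2,2}$. Then $\chi'_{qm\Sigma}(K_{n,m})=2$ if $n\ne m$, and $\chi'_{qm\Sigma}(K_{n,m})=3$ if $n=m$.
   Context: A $k$-edge-coloring of $G$ is any map $c:E(G)\to\{1,\dots,k\}$ (adjacent edges may share colors). It induces $\sigma_c(v)=\sum_{u\in N(v)}c(vu)$. The coloring is neighbor sum distinguishing (NSD) if $\sigma_c(u)\ne\sigma_c(v)$ for every edge $uv$. It is quasi-majority if every vertex $v$ is incident to at most $\lceil d(v)/2\rceil$ edges of each single color. $\chi'_{qm\Sigma}(G)$ denotes the least $k$ such that $G$ has a $k$-edge-coloring that is both quasi-majority and NSD. A graph is nice if it has no connected component isomorphic to $K_2$. *)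

(* Defs.v *)
From mathcomp Require Import all_boot.
Set Implicit Arguments. Unset Strict Implicit. Unset Printing Implicit Defensive.

Definition simple_graph (T : finType) (e : rel T) : Prop :=
  (forall x y, e x y = e y x) /\ (forall x, ~~ e x x).

Definition deg (T : finType) (e : rel T) (v : T) : nat := #|[set u | e v u]|.

(* A graph is nice if no connected component is isomorphic to K_2, i.e. there
   is no edge uv whose two endpoints both have degree 1. *)
Definition nice (T : finType) (e : rel T) : Prop :=
  forall u v, e u v -> ~ (deg e u = 1 /\ deg e v = 1).

(* A k-edge-colouring: a colour c u v = c v u in {1,...,k} for every edge uv
   (values of c on non-edges are irrelevant). *)
Definition edge_coloring (T : finType) (e : rel T) (k : nat) (c : T -> T -> nat) : Prop :=
  forall u v, e u v -> c u v = c v u /\ 1 <= c u v <= k.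

Definition sigma (T : finType) (e : rel T) (c : T -> T -> nat) (v : T) : nat :=
  \sum_(u | e v u) c v u.

Definition nsd (T : finType) (e : rel T) (c : T -> T -> nat) : Prop :=
  forall u v, e u v -> sigma e c u <> sigma e c v.

Definition quasi_majority (T : finType) (e : rel T) (c : T -> T -> nat) : Prop :=
  forall (v : T) (a : nat), #|[set u | e v u & c v u == a]| <= uphalf (deg e v).

Definition has_qm_nsd_coloring (T : finType) (e : rel T) (k : nat) : Prop :=
  exists c, [/\ edge_coloring e k c, quasi_majority e c & nsd e c].

Definition chi_qmS_is (T : finType) (e : rel T) (k : nat) : Prop :=
  has_qm_nsd_coloring e k /\ forall k', has_qm_nsd_coloring e k' -> k <= k'.

Definition Knm_rel (n m : nat) : rel ('I_n + 'I_m)%type :=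
  fun x y => match x, y with
             | inl _, inr _ => true
             | inr _, inl _ => true
             | _, _ => false
             end.
Arguments Knm_rel : clear implicits.

(* Main.v *)
Require Import Defs.
From mathcomp Require Import all_boot zify.

Lemma sum_left n m (F : 'I_n + 'I_m -> nat) i :
  \sum_(u | Knm_rel n m (inl i) u) F u = \sum_(j < m) F (inr j).
Proof. by rewrite big_sumType /= big_pred0_eq add0n. Qed.

Lemma sum_right n m (F : 'I_n + 'I_m -> nat) j :
  \sum_(u | Knm_rel n m (inr j) u) F u = \sum_(i < n) F (inl i).
Proof. by rewrite big_sumType /= big_pred0_eq addn0. Qed.

Lemma card_ind (T : finType) (P Q : pred T) :
  #|[set u | P u & Q u]| = \sum_(u | P u) (Q u : nat).
Proof.
rewrite -sum1_card big_mkcond [RHS]big_mkcond /=; apply: eq_bigr => u _.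
by rewrite inE; case: (P u); case: (Q u).
Qed.

Lemma sum2 n h (x y : nat) : h <= n ->
  \sum_(j < n) (if j < h then x else y) = h * x + (n - h) * y.
Proof.
move=> hn; rewrite -(big_mkord xpredT (fun j => if j < h then x else y)).
rewrite (big_cat_nat (n:=h)) //=.
rewrite (eq_big_nat _ _ (F2 := fun _ => x)); last by move=> j /andP [_ ->].
rewrite [X in _ + X](eq_big_nat _ _ (F2 := fun _ => y)); last first.
  by move=> j /andP [hj _]; rewrite ltnNge hj.
by rewrite !sum_nat_const_nat subn0.
Qed.

Lemma sum3 n t (x y z : nat) : t < n ->
  \sum_(j < n) (if j < t then x else if (j : nat) == t then y else z) = t * x + y + (n - t.+1) * z.
Proof.
move=> tn; rewrite -(big_mkord xpredT (fun j => if j < t then x else if j == t then y else z)).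
rewrite (big_cat_nat (n:=t)) //=; last exact: ltnW.
rewrite [X in _ + X](big_cat_nat (n:=t.+1)) //= big_nat1 ltnn eqxx.
rewrite (eq_big_nat _ _ (F2 := fun _ => x)); last by move=> j /andP [_ ->].
rewrite [X in _ + (_ + X)](eq_big_nat _ _ (F2 := fun _ => z)); last first.
  by move=> j /andP [hj _]; rewrite ltnNge ltnW // gtn_eqF.
rewrite !sum_nat_const_nat subn0; lia.
Qed.

Lemma uphalfP n : exists k, (n = k + k /\ uphalf n = k) \/ (n = (k + k).+1 /\ uphalf n = k.+1).
Proof.
exists n./2; rewrite uphalf_half; have := odd_double_half n.
case: (odd n) => /= <-; rewrite -addnn; [right|left]; split => //; lia.
Qed.

Lemma sumc n (x : nat) : \sum_(i < n) x = n * x.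
Proof. by rewrite sum_nat_const card_ord. Qed.

Lemma deg_left n m i : deg (Knm_rel n m) (inl i) = m.
Proof.
rewrite /deg -sum1_card (eq_bigl (fun u => Knm_rel n m (inl i) u)); last by move=> u; rewrite inE.
by rewrite sum_left sumc muln1.
Qed.

Lemma deg_right n m j : deg (Knm_rel n m) (inr j) = n.
Proof.
rewrite /deg -sum1_card (eq_bigl (fun u => Knm_rel n m (inr j) u)); last by move=> u; rewrite inE.
by rewrite sum_right sumc muln1.
Qed.

Definition liftc n m (f : nat -> nat -> nat) (x y : 'I_n + 'I_m) : nat :=
  match x, y with
  | inl i, inr j => f i j
  | inr j, inl i => f i j
  | _, _ => 0
  end.

Definition rowsplit (H : nat) (P Q : nat -> nat) (i j : nat) : nat :=
  if i < H then P j else Q j.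
Definition p3 (t x y z j : nat) : nat := if j < t then x else if j == t then y else z.
Definition p2 (h x y j : nat) : nat := if j < h then x else y.

Lemma row_sum n (G : nat -> nat) H P Q (i : nat) :
  \sum_(j < n) G (rowsplit H P Q i j) =
  if i < H then \sum_(j < n) G (P j) else \sum_(j < n) G (Q j).
Proof. by rewrite /rowsplit; case: ifP. Qed.

Lemma col_sum n (G : nat -> nat) H P Q (j : nat) : H <= n ->
  \sum_(i < n) G (rowsplit H P Q i j) = H * G (P j) + (n - H) * G (Q j).
Proof.
move=> hH; rewrite -sum2 //; apply: eq_bigr => i _; rewrite /rowsplit; by case: ifP.
Qed.

Lemma p3_sum n (G : nat -> nat) t x y z : t < n ->
  \sum_(j < n) G (p3 t x y z j) = t * G x + G y + (n - t.+1) * G z.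
Proof.
move=> ht; rewrite -sum3 //; apply: eq_bigr => j _; rewrite /p3; by case: ifP => //; case: ifP.
Qed.

Lemma p2_sum n (G : nat -> nat) h x y : h <= n ->
  \sum_(j < n) G (p2 h x y j) = h * G x + (n - h) * G y.
Proof.
move=> hh; rewrite -sum2 //; apply: eq_bigr => j _; rewrite /p2; by case: ifP.
Qed.

Lemma lb1 n m k : 1 <= n -> 1 <= m -> (2 <= n \/ 2 <= m) ->
  has_qm_nsd_coloring (Knm_rel n m) k -> 2 <= k.
Proof.
move=> hn hm h2 [c [ec qm _]].
pose i0 : 'I_n := Ordinal hn. pose j0 : 'I_m := Ordinal hm.
have [_ /andP [h1 hk]] := ec (inl i0) (inr j0) erefl.
case: (ltnP 1 k) => // hk1.
have all1 : forall u v, Knm_rel n m u v -> c u v = 1.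
  move=> u v huv; have [_ /andP [a b]] := ec u v huv; lia.
case: h2 => h2.
- have := qm (inr j0) 1; rewrite card_ind sum_right deg_right.
  rewrite (eq_bigr (fun _ => 1)); last by move=> i _; rewrite all1.
  rewrite sumc muln1 => hu.
  have [q [[e1 e2]|[e1 e2]]] := uphalfP n; lia.
- have := qm (inl i0) 1; rewrite card_ind sum_left deg_left.
  rewrite (eq_bigr (fun _ => 1)); last by move=> i _; rewrite all1.
  rewrite sumc muln1 => hu.
  have [q [[e1 e2]|[e1 e2]]] := uphalfP m; lia.
Qed.

Lemma two_col n (g : 'I_n -> nat) : (forall j, 1 <= g j <= 2) ->
  \sum_(j < n) g j = n + \sum_(j < n) (g j == 2 : nat) /\
  n = \sum_(j < n) (g j == 1 : nat) + \sum_(j < n) (g j == 2 : nat).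
Proof.
move=> hg; split.
- rewrite -[X in _ = X + _](muln1 n) -sumc -big_split; apply: eq_bigr => j _.
  have := hg j; case: (g j) => [|[|[|]]] //.
- rewrite -[LHS](muln1 n) -sumc -big_split; apply: eq_bigr => j _.
  have := hg j; case: (g j) => [|[|[|]]] //.
Qed.

Lemma lb2 n : 2 <= n -> ~ has_qm_nsd_coloring (Knm_rel n n) 2.
Proof.
move=> hn [c [ec qm nsd]].
have hu : uphalf n + uphalf n <= n.+1.
  have [q [[e1 e2]|[e1 e2]]] := uphalfP n; lia.
have rng_l : forall i, n + n - uphalf n <= sigma (Knm_rel n n) c (inl i) <= n + uphalf n.
  move=> i; rewrite /sigma sum_left.
  have [s1 s2] := @two_col n (fun j => c (inl i) (inr j))
     (fun j => (ec (inl i) (inr j) erefl).2).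
  have q1 := qm (inl i) 1; have q2 := qm (inl i) 2.
  rewrite card_ind sum_left deg_left in q1; rewrite card_ind sum_left deg_left in q2.
  move: q1 q2 s1 s2; set A := \sum_(j < n) (c (inl i) (inr j) == 1); set B := \sum_(j < n) (c (inl i) (inr j) == 2); set S := \sum_(j < n) c (inl i) (inr j). move=> *; apply/andP; split; lia.
have rng_r : forall j, n + n - uphalf n <= sigma (Knm_rel n n) c (inr j) <= n + uphalf n.
  move=> j; rewrite /sigma sum_right.
  have [s1 s2] := @two_col n (fun i => c (inr j) (inl i))
     (fun i => (ec (inr j) (inl i) erefl).2).
  have q1 := qm (inr j) 1; have q2 := qm (inr j) 2.
  rewrite card_ind sum_right deg_right in q1; rewrite card_ind sum_right deg_right in q2.
  move: q1 q2 s1 s2; set A := \sum_(i < n) (c (inr j) (inl i) == 1); set B := \sum_(i < n) (c (inr j) (inl i) == 2); set S := \sum_(i < n) c (inr j) (inl i). move=> *; apply/andP; split; lia.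
have hn1 : 0 < n by lia.
pose i0 : 'I_n := Ordinal hn1.
set s0 := sigma (Knm_rel n n) c (inl i0).
set s1 := sigma (Knm_rel n n) c (inr i0).
have d01 : s0 <> s1 := nsd (inl i0) (inr i0) erefl.
have El : forall i, sigma (Knm_rel n n) c (inl i) = s0.
  move=> i; have := nsd (inl i) (inr i0) erefl; have := rng_l i; have := rng_l i0;
  have := rng_r i0; rewrite -/s0 -/s1; lia.
have Er : forall j, sigma (Knm_rel n n) c (inr j) = s1.
  move=> j; have := nsd (inl i0) (inr j) erefl; have := rng_r j; have := rng_l i0;
  have := rng_r i0; rewrite -/s0 -/s1; lia.
have tot : \sum_(i < n) sigma (Knm_rel n n) c (inl i) = \sum_(j < n) sigma (Knm_rel n n) c (inr j).
  rewrite (eq_bigr (fun i => \sum_(j < n) c (inl i) (inr j))); last by move=> i _; rewrite /sigma sum_left.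
  rewrite [RHS](eq_bigr (fun j => \sum_(i < n) c (inl i) (inr j))); last first.
    move=> j _; rewrite /sigma sum_right; apply: eq_bigr => i _.
    by rewrite (ec (inl i) (inr j) erefl).1.
  exact: exchange_big.
have L : \sum_(i < n) sigma (Knm_rel n n) c (inl i) = n * s0.
  rewrite -sumc; apply: eq_bigr => i _; exact: El.
have R : \sum_(j < n) sigma (Knm_rel n n) c (inr j) = n * s1.
  rewrite -sumc; apply: eq_bigr => j _; exact: Er.
apply: d01; move: tot; rewrite L R => /eqP; rewrite eqn_pmul2l; last exact: hn1.
by move/eqP.
Qed.

Lemma ub n m (f : nat -> nat -> nat) k :
 (forall (i : 'I_n) (j : 'I_m), 1 <= f i j <= k) ->
 (forall (i : 'I_n) a, \sum_(j < m) (f i j == a : nat) <= uphalf m) ->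
 (forall (j : 'I_m) a, \sum_(i < n) (f i j == a : nat) <= uphalf n) ->
 (forall (i : 'I_n) (j : 'I_m), \sum_(j' < m) f i j' <> \sum_(i' < n) f i' j) ->
 has_qm_nsd_coloring (Knm_rel n m) k.
Proof.
move=> hb hr hc hs; exists (@liftc n m f); split.
- by move=> [i|j] [i'|j'] //= _; split.
- move=> [i|j] a; rewrite card_ind ?sum_left ?sum_right ?deg_left ?deg_right /=.
  + exact: hr.
  + exact: hc.
- move=> [i|j] [i'|j'] //= _; rewrite /sigma ?sum_left ?sum_right /=.
  + exact: hs.
  + by apply: nesym; apply: hs.
Qed.

Lemma case_eq3 t n : 1 <= t -> (n = t + t + 1 \/ n = t + t + 2) -> uphalf n = t.+1 ->
  has_qm_nsd_coloring (Knm_rel n n) 3.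
Proof.
move=> ht hn hu.
have htn : t < n by lia.
have htn' : t.+1 <= n by lia.
apply: (@ub n n (rowsplit t.+1 (p3 t 1 2 3) (p3 t 2 3 1)) 3).
- move=> i j; rewrite /rowsplit /p3; by repeat case: ifP => _.
- move=> i a; rewrite (@row_sum n (fun v => nat_of_bool (v == a))).
  rewrite !(@p3_sum n (fun v => nat_of_bool (v == a))) // hu.
  case: ifP => _; case: a => [|[|[|[|a]]]] /=; lia.
- move=> j a; rewrite (@col_sum n (fun v => nat_of_bool (v == a))) // hu /p3.
  case: ifP => _; [|case: ifP => _]; case: a => [|[|[|[|a]]]] /=; lia.
- move=> i j; rewrite (@row_sum n (fun v => v)) (@col_sum n (fun v => v)) //.
  rewrite !(@p3_sum n (fun v => v)) // /p3.
  case: ifP => _; case: ifP => _; try case: ifP => _; lia.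
Qed.

Lemma case_neq n m : 1 <= n -> 1 <= m -> n <> m -> has_qm_nsd_coloring (Knm_rel n m) 2.
Proof.
move=> hn hm hnm.
have [a ha] := uphalfP n. have [b hb] := uphalfP m.
have hH : uphalf n <= n by lia.
have hh : uphalf m <= m by lia.
apply: (@ub n m (rowsplit (uphalf n) (p2 (uphalf m) 1 2) (p2 (uphalf m) 2 1)) 2).
- move=> i j; rewrite /rowsplit /p2; by repeat case: ifP => _.
- move=> i x; rewrite (@row_sum m (fun v => nat_of_bool (v == x))).
  rewrite !(@p2_sum m (fun v => nat_of_bool (v == x))) //.
  case: ifP => _; case: x => [|[|[|x]]] /=; lia.
- move=> j x; rewrite (@col_sum n (fun v => nat_of_bool (v == x))) // /p2.
  case: ifP => _; case: x => [|[|[|x]]] /=; lia.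
- move=> i j; rewrite (@row_sum m (fun v => v)) (@col_sum n (fun v => v)) //.
  rewrite !(@p2_sum m (fun v => v)) // /p2.
  case: ifP => _; case: ifP => _; lia.
Qed.

Theorem mainTheorem5 (n m : nat) :
  1 <= n -> 1 <= m ->
  nice (Knm_rel n m) ->
  ~ (n = 2 /\ m = 2) ->
  chi_qmS_is (Knm_rel n m) (if n == m then 3 else 2).
Proof.
move=> hn hm hnice hne.
have [enm|nm] := eqVneq n m.
- subst m.
  have hn2 : 2 <= n.
    case: (ltnP 1 n) => // h1.
    have e1 : n = 1 by lia.
    exfalso; apply: (hnice (inl (Ordinal hn)) (inr (Ordinal hn)) erefl).
    by rewrite deg_left deg_right.
  have hn3 : n <> 2 by move=> e; apply: hne.
  have [k [[e1 e2]|[e1 e2]]] := uphalfP n.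
  + split; first by apply: (@case_eq3 k.-1); lia.
    move=> k' hk'; have h2 := @lb1 n n k' hn hn (or_introl hn2) hk'.
    have nl := @lb2 n hn2; case: (k' =P 2) => [e|ne]; [by subst k'; case: (nl hk')|lia].
  + split; first by apply: (@case_eq3 k); lia.
    move=> k' hk'; have h2 := @lb1 n n k' hn hn (or_introl hn2) hk'.
    have nl := @lb2 n hn2; case: (k' =P 2) => [e|ne]; [by subst k'; case: (nl hk')|lia].
- split; first by apply: case_neq => //; apply/eqP.
  move=> k' hk'; apply: (@lb1 n m k' hn hm _ hk'); lia.
Qed.
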